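(* Let $(X_n,\eta_n)$ be a time-homogeneous Markov chain on a locally finite set $\Sigma\subseteq\mathbb{R}_+\times S$ ($S$ finite). Suppose that for some $p>2$ there is $C_p<\infty$ with $\mathbb{E}_{x,i}[|X_{n+1}-X_n|^p]\le C_p$ for all $(x,i)\in\Sigma$, and suppose there exist $c_i\in\mathbb{R}$, $s_i^2\ge0$ (at least one $s_i^2\ne0$) with $\mu_i(x)=c_i/x+o(x^{-1})$ and $\sigma_i^2(x)=s_i^2+o(1)$ as $x\to\infty$. Let $\zeta\in(\frac1{p-1},1)$ and $E_n=\{|X_{n+1}-X_n|\le X_n^\zeta\}$. Then for any $r\in\mathbb{R}$, as $x\to\infty$, \[\mathbb{E}_{x,i}[(X_{n+1}^r-X_n^r)\mathbf 1(E_n)]=rx^{r-2}\Big(c_i+\frac{r-1}2s_i^2+o(1)\Big).\]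
   Context: $\mathbb{E}_{x,i}[\cdot]=\mathbb{E}[\cdot\mid X_n=x,\eta_n=i]$; $\mu_i(x)=\mathbb{E}_{x,i}[X_{n+1}-X_n]$; $\sigma_i^2(x)=\mathbb{E}_{x,i}[(X_{n+1}-X_n)^2]$. *)

(* Defs.v *)
From HB Require Import structures.
From mathcomp Require Import all_boot all_order all_algebra.
From mathcomp Require Import all_classical all_reals all_analysis.
Set Implicit Arguments. Unset Strict Implicit. Unset Printing Implicit Defensive.
Import Order.TTheory GRing.Theory Num.Theory.
Local Open Scope classical_set_scope.
Local Open Scope ring_scope.

(* A time-homogeneous Markov chain (X_n, eta_n) on Sigma ⊆ R_+ x S is
   described by its one-step transition probabilities
   P s t = Pr[(X_{n+1},eta_{n+1}) = t | (X_n,eta_n) = s].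
   All quantities in the statement are one-step conditional expectations
   E_{x,i}[ . ], i.e. sums over Sigma weighted by P (x,i) _. *)

Definition locally_finite_state (R : realType) (S : finType)
  (Sig : set (R * S)) : Prop :=
  Sig `<=` [set z | 0 <= z.1] /\
  forall B : R, finite_set (Sig `&` [set z | z.1 <= B]).

Definition transition_kernel (R : realType) (S : finType)
  (Sig : set (R * S)) (P : R * S -> R * S -> R) : Prop :=
  (forall s t, 0 <= P s t) /\
  (forall s, Sig s -> (\esum_(t in Sig) (P s t)%:E)%E = 1%E).

Definition Ecur (R : realType) (S : finType) (Sig : set (R * S))
  (P : R * S -> R * S -> R) (s : R * S) (f : R * S -> R) : R :=
  fine (\esum_(t in Sig) (P s t * Num.max (f t) 0)%:E)%E
  - fine (\esum_(t in Sig) (P s t * Num.max (- f t) 0)%:E)%E.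

Definition mu_drift (R : realType) (S : finType) (Sig : set (R * S))
  (P : R * S -> R * S -> R) (x : R) (i : S) : R :=
  Ecur Sig P (x, i) (fun t => t.1 - x).

Definition sigma2 (R : realType) (S : finType) (Sig : set (R * S))
  (P : R * S -> R * S -> R) (x : R) (i : S) : R :=
  Ecur Sig P (x, i) (fun t => (t.1 - x) ^+ 2).

(* Main.v *)
Require Import Defs.
From HB Require Import structures.
From mathcomp Require Import all_boot all_order all_algebra.
From mathcomp Require Import all_classical all_reals all_analysis.
From mathcomp Require Import lra ring.
Import Order.TTheory GRing.Theory Num.Theory.
Local Open Scope classical_set_scope.
Local Open Scope ring_scope.

Section Taylor.
Context {R : realType}.

Lemma expR_sub1 (z : R) : `|expR z - 1| <= `|z| * expR `|z|.
Proof.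
have e1 := expR_ge1Dx z.
have e2 := expR_ge1Dx (- z).
have ez := expR_gt0 z.
have h2 : expR z - 1 <= z * expR z.
  have : (1 - z) * expR z <= expR (- z) * expR z.
    apply: ler_wpM2r; [exact: ltW| lra].
  rewrite expRN mulVf ?gt_eqF//.
  nra.
have ea : 1 <= expR `|z| by rewrite -expR0 ler_expR.
have [z0|z0] := leP 0 z.
  have ez1 : 1 <= expR z by rewrite -expR0 ler_expR.
  rewrite (ger0_norm z0) ger0_norm; last lra.
  lra.
have h3 : z * expR z <= 0 by rewrite nmulr_rle0 ?expR_gt0.
have h4 : 0 <= - z * expR (- z) by apply: mulr_ge0; [lra|exact: expR_ge0].
have h5 : - z <= - z * expR (- z).
  rewrite ler_peMr //; lra.
rewrite [`|z|]ltr0_norm // ler_norml; apply/andP; split; lra.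
Qed.

Lemma ln_near1 (y : R) : `|y - 1| <= 2^-1 -> `|ln y| <= 2 * `|y - 1|.
Proof.
move=> hy.
have y0 : 0 < y by move: hy; rewrite ler_norml; lra.
have h1 : ln y <= y - 1.
  have := @le_ln1Dx R (y - 1); rewrite subrKC; apply; lra.
have h2 : ln (y^-1) <= y^-1 - 1.
  have := @le_ln1Dx R (y^-1 - 1); rewrite subrKC; apply.
  have : 0 < y^-1 by rewrite invr_gt0.
  lra.
rewrite lnV ?posrE // in h2.
have h3 : y^-1 - 1 = (1 - y) / y by rewrite mulrBl mulfV ?gt_eqF // mul1r.
have h4 : (1 - y) / y <= 2 * `|y - 1|.
  rewrite ler_pdivrMr //.
  have := ler_norm (1 - y); rewrite distrC.
  move: hy; rewrite ler_norml => /andP[ha hb].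
  have : 0 <= `|y - 1| by [].
  nra.
rewrite ler_norml; apply/andP; split; last first.
  have := ler_norm (y - 1); lra.
lra.
Qed.

Lemma powR_near1 (y a : R) : `|y - 1| <= 2^-1 ->
  `|y `^ a - 1| <= 2 * `|a| * expR `|a| * `|y - 1|.
Proof.
move=> hy.
have y0 : 0 < y by move: hy; rewrite ler_norml; lra.
have hl := @ln_near1 y hy.
rewrite /powR gt_eqF //.
have hz : `|a * ln y| <= 2 * `|a| * `|y - 1|.
  rewrite normrM -mulrA [2 * (_ * _)]mulrCA; apply: ler_wpM2l => //.
have hz2 : `|a * ln y| <= `|a|.
  apply: (le_trans hz).
  have : 0 <= `|a| by [].
  nra.
apply: (le_trans (expR_sub1 _)).
have e1 : expR `|a * ln y| <= expR `|a| by rewrite ler_expR.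
have : 0 <= `|a * ln y| by [].
have : 0 < expR `|a * ln y| by apply: expR_gt0.
have : 0 <= `|y - 1| by [].
have : 0 <= `|a| by [].
nra.
Qed.


Lemma mvt_seg (f df : R -> R) (a b M : R) : 0 < a -> a <= b ->
  (forall z : R, 0 < z -> is_derive z 1 f (df z)) ->
  (forall z : R, a <= z <= b -> `|df z| <= M) ->
  `|f b - f a| <= M * (b - a).
Proof.
move=> a0 ab hd hM.
have hd' : forall z : R, z \in `]a, b[ -> is_derive z 1 f (df z).
  move=> z; rewrite in_itv /= => /andP[z1 _]; apply: hd; lra.
have hc : {in `[a, b], forall z, derivable f z 1}.
  move=> z; rewrite in_itv /= => /andP[z1 _].
  apply: ex_derive; apply: hd; lra.
have [c cab ->] := MVT_segment ab hd' (derivable_within_continuous hc).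
have ab0 : 0 <= b - a by rewrite subr_ge0.
rewrite normrM (ger0_norm ab0); apply: ler_wpM2r; first by rewrite subr_ge0.
by apply: hM; move: cab; rewrite in_itv.
Qed.

Lemma mvt_abs (f df : R -> R) (y M : R) : 0 < y ->
  (forall z : R, 0 < z -> is_derive z 1 f (df z)) ->
  (forall z : R, `|z - 1| <= `|y - 1| -> `|df z| <= M) ->
  `|f y - f 1| <= M * `|y - 1|.
Proof.
move=> y0 hd hM.
have [y1|y1] := leP y 1.
  have y10 : 0 <= 1 - y by rewrite subr_ge0.
  rewrite distrC [`|y - 1|]distrC (ger0_norm y10).
  apply: mvt_seg => // z /andP[z1 z2]; apply: hM.
  rewrite distrC (distrC y) !ger0_norm; lra.
have y10 : 0 < y - 1 by rewrite subr_gt0.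
rewrite (gtr0_norm y10).

apply: mvt_seg => //; first exact: ltW.
move=> z /andP[z1 z2]; apply: hM.
rewrite !ger0_norm; lra.
Qed.

Lemma is_derive_conv (f g : R -> R) (x df dg : R) : is_derive x 1 f df ->
  (forall z, f z = g z) -> df = dg -> is_derive x 1 g dg.
Proof. by move=> h fg <-; have -> : g = f by apply/funext => z; rewrite fg. Qed.

Definition G1 (r y : R) := r * y `^ (r - 1) - r - r * (r - 1) * (y - 1).
Lemma dG1 (r y : R) : 0 < y -> is_derive y 1 (G1 r) (r * (r - 1) * (y `^ (r - 2) - 1)).
Proof.
move=> y0.
have h1 := is_deriveZ r (is_derive1_powR (r - 1) y0).
have h2 := is_deriveZ (r * (r - 1)) (is_deriveB (is_derive_id y 1) (is_derive_cst (1:R) y (1:R))).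
have h3 := is_deriveB (is_deriveB h1 (is_derive_cst r y 1)) h2.
refine (@is_derive_conv _ _ _ _ _ h3 _ _).
  by move=> z; rewrite /G1 !fctE /=.
have -> : r - 1 - 1 = r - 2 by ring.
rewrite /GRing.scale /=. ring.




Qed.
Definition G (r y : R) := y `^ r - 1 - r * (y - 1) - r * (r - 1) / 2 * (y - 1) ^+ 2.
Lemma dG (r y : R) : 0 < y -> is_derive y 1 (G r) (G1 r y).
Proof.
move=> y0.
have h1 := is_derive1_powR r y0.
have h2 := is_deriveZ r (is_deriveB (is_derive_id y 1) (is_derive_cst (1:R) y (1:R))).
have h3 := is_deriveZ (r * (r - 1) / 2) (is_deriveX 2 (is_deriveB (is_derive_id y 1) (is_derive_cst (1:R) y (1:R)))).
have h4 := is_deriveB (is_deriveB (is_deriveB h1 (is_derive_cst (1:R) y (1:R))) h2) h3.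
refine (@is_derive_conv _ _ _ _ _ h4 _ _).
  by move=> z; rewrite /G !fctE /=.
rewrite /G1 /GRing.scale /= expr1 !fctE. by field.
Qed.

Definition Lc (a : R) := 2 * `|a| * expR `|a|.

Lemma taylor_bound (r y : R) : `|y - 1| <= 2^-1 ->
  `|G r y| <= `|r| * `|r - 1| * Lc (r - 2) * `|y - 1| ^+ 3.
Proof.
move=> hy.
have y0 : 0 < y by move: hy; rewrite ler_norml; lra.
set K := `|r| * `|r - 1| * Lc (r - 2).
have K0 : 0 <= K by rewrite /K /Lc !mulr_ge0 // expR_ge0.
have G11 : G1 r 1 = 0 by rewrite /G1 powR1; ring.
have G0 : G r 1 = 0 by rewrite /G powR1; ring.
have hG2 : forall z, `|z - 1| <= 2^-1 ->
    `|r * (r - 1) * (z `^ (r - 2) - 1)| <= K * `|z - 1|.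
  move=> z hz; rewrite normrM normrM /K.
  have := @powR_near1 z (r - 2) hz; rewrite /Lc => h.
  have : 0 <= `|r| * `|r - 1| by [].
  nra.

have hG1 : forall z, `|z - 1| <= 2^-1 -> `|G1 r z| <= K * `|z - 1| ^+ 2.
  move=> z hz.
  have z0 : 0 < z by move: hz; rewrite ler_norml; lra.
  have := @mvt_abs (G1 r) (fun w => r * (r - 1) * (w `^ (r - 2) - 1)) z (K * `|z - 1|) z0
    (fun w w0 => @dG1 r w w0).
  rewrite G11 subr0 expr2 mulrA; apply => w hw.
  apply: (le_trans (hG2 w (le_trans hw hz))).
  by apply: ler_wpM2l.
have := @mvt_abs (G r) (G1 r) y (K * `|y - 1| ^+ 2) y0 (fun w w0 => @dG r w w0).
rewrite G0 subr0 => h; rewrite (exprSr _ 2) mulrA; apply: h => w hw.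
apply: (le_trans (hG1 w (le_trans hw hy))).
apply: ler_wpM2l => //; apply: lerXn2r; rewrite ?nnegrE //.
Qed.
End Taylor.


Section Esum.
Context {R : realType} {S : finType} {Sig : set (R * S)}
  {P : R * S -> R * S -> R} {s : R * S}.
Hypothesis P0 : forall t, 0 <= P s t.

Definition NN (g : R * S -> R) : \bar R := (\esum_(t in Sig) (P s t * g t)%:E)%E.

Lemma NN_ge0 {g} : (forall t, 0 <= g t) -> (0 <= NN g)%E.
Proof. by move=> g0; apply: esum_ge0 => t _; rewrite lee_fin mulr_ge0. Qed.

Lemma NN_le {g h} : (forall t, Sig t -> g t <= h t) -> (NN g <= NN h)%E.
Proof. by move=> gh; apply: le_esum => t St; rewrite lee_fin ler_wpM2l // gh. Qed.

Lemma NN_D g h : (forall t, 0 <= g t) -> (forall t, 0 <= h t) ->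
  NN (fun t => g t + h t) = (NN g + NN h)%E.
Proof.
move=> g0 h0; rewrite /NN -esumD; last 2 first.
- by move=> t _; rewrite lee_fin mulr_ge0.
- by move=> t _; rewrite lee_fin mulr_ge0.
by apply: eq_esum => t _; rewrite mulrDr EFinD.
Qed.

Lemma NN_Z c g : 0 <= c -> (forall t, 0 <= g t) ->
  NN (fun t => c * g t) = (c%:E * NN g)%E.
Proof.
move=> c0 g0; have [->|cpos] := eqVneq c 0.
  rewrite mul0e /NN; apply: esum1 => t _; by rewrite mul0r mulr0.
have cp : 0 < c by rewrite lt_def cpos c0.
rewrite /NN /esum -ereal_sup_pZl //; congr ereal_sup.
rewrite image_comp; apply: eq_imagel => A _ /=.
rewrite ge0_mule_fsumr; last by move=> t; rewrite lee_fin mulr_ge0.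
by apply: eq_fsbigr => t _; rewrite -EFinM mulrCA.
Qed.

Lemma NN_ext {g h} : (forall t, Sig t -> g t = h t) -> NN g = NN h.
Proof. by move=> gh; apply: eq_esum => t St; rewrite gh. Qed.

Lemma fine_Z c (e : \bar R) : 0 <= c -> (0 <= e)%E -> fine (c%:E * e)%E = c * fine e.
Proof.
move=> c0; case: e => [e| |] //= _.
have [->|cpos] := eqVneq c 0; first by rewrite mul0e mul0r.
by rewrite gt0_muley ?lte_fin ?lt_def ?cpos ?c0 // mulr0.
Qed.

Definition Int (f : R * S -> R) := NN (fun t => `|f t|) \is a fin_num.

Lemma NN_fin_le {g h} : (forall t, 0 <= g t) -> (forall t, Sig t -> g t <= h t) ->
  NN h \is a fin_num -> NN g \is a fin_num.
Proof.
move=> g0 gh hf; rewrite ge0_fin_numE ?NN_ge0 //.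
have hl : (NN h < +oo)%E by move: hf; rewrite fin_numE ltey => /andP[_ ].
exact: (le_lt_trans (NN_le gh) hl).

Qed.

Lemma Ecur_split f g h : (forall t, 0 <= g t) -> (forall t, 0 <= h t) ->
  NN g \is a fin_num -> NN h \is a fin_num ->
  (forall t, Sig t -> f t = g t - h t) ->
  Ecur Sig P s f = fine (NN g) - fine (NN h).
Proof.
move=> g0 h0 gf hf fgh.
set fp := fun t => Num.max (f t) 0.
set fn := fun t => Num.max (- f t) 0.
have fp0 t : 0 <= fp t by rewrite /fp le_max lexx orbT.
have fn0 t : 0 <= fn t by rewrite /fn le_max lexx orbT.
have fpg : NN fp \is a fin_num.
  apply: (NN_fin_le fp0 _ gf) => t St; rewrite /fp ge_max g0 andbT fgh //.
  by rewrite lerBlDr lerDl.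
have fnh : NN fn \is a fin_num.
  apply: (NN_fin_le fn0 _ hf) => t St; rewrite /fn ge_max h0 andbT fgh //.
  by rewrite opprB lerBlDr lerDl.
have e : (NN fp + NN h = NN fn + NN g)%E.
  rewrite -!NN_D //; apply: NN_ext => t St; rewrite /fp /fn /=.
  have := fgh t St.
  case: (leP (f t) 0) => hf0.
    have -> : Num.max (- f t) 0 = - f t by rewrite max_l // oppr_ge0.
    lra.
  have -> : Num.max (- f t) 0 = 0 by rewrite max_r // oppr_le0 ltW.
  lra.
have : fine (NN fp + NN h)%E = fine (NN fn + NN g)%E by rewrite e.
rewrite !fineD // /Ecur -/(NN fp) -/(NN fn).
lra.
Qed.


Lemma Ecur_def f : Ecur Sig P s f =
  fine (NN (fun t => Num.max (f t) 0)) - fine (NN (fun t => Num.max (- f t) 0)).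
Proof. by []. Qed.

Lemma max0_ge0 (y : R) : 0 <= Num.max y 0.
Proof. by rewrite le_max lexx orbT. Qed.

Lemma max0_le_abs (y : R) : Num.max y 0 <= `|y|.
Proof. by rewrite ge_max normr_ge0 ler_norm. Qed.

Lemma Int_parts {f} : Int f ->
  NN (fun t => Num.max (f t) 0) \is a fin_num /\
  NN (fun t => Num.max (- f t) 0) \is a fin_num.
Proof.
move=> If; split; apply: (NN_fin_le (fun t => max0_ge0 _) _ If) => t _.
  exact: max0_le_abs.
by rewrite -normrN; exact: max0_le_abs.
Qed.

Lemma Int_le {f g} : (forall t, 0 <= g t) -> (forall t, Sig t -> `|f t| <= g t) ->
  NN g \is a fin_num -> Int f.
Proof. by move=> g0 fg gf; apply: (NN_fin_le (fun t => normr_ge0 _) fg gf). Qed.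

Lemma Ecur_bound f g : (forall t, 0 <= g t) -> (forall t, Sig t -> `|f t| <= g t) ->
  NN g \is a fin_num -> `|Ecur Sig P s f| <= fine (NN g).
Proof.
move=> g0 fg gf.
have [h1 h2] := Int_parts (Int_le g0 fg gf).
have l1 : fine (NN (fun t => Num.max (f t) 0)) <= fine (NN g).
  apply: fine_le => //; apply: NN_le => t St.
  exact: le_trans (max0_le_abs _) (fg t St).
have l2 : fine (NN (fun t => Num.max (- f t) 0)) <= fine (NN g).
  apply: fine_le => //; apply: NN_le => t St.
  by apply: le_trans (max0_le_abs _) _; rewrite normrN fg.
have p1 := fine_ge0 (NN_ge0 (fun t => max0_ge0 (f t))).
have p2 := fine_ge0 (NN_ge0 (fun t => max0_ge0 (- f t))).
rewrite Ecur_def ler_norml; apply/andP; split; lra.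
Qed.

Lemma EcurD f1 f2 : Int f1 -> Int f2 ->
  Ecur Sig P s (fun t => f1 t + f2 t) = Ecur Sig P s f1 + Ecur Sig P s f2.
Proof.
move=> I1 I2; have [a1 b1] := Int_parts I1; have [a2 b2] := Int_parts I2.
rewrite (@Ecur_split _ (fun t => Num.max (f1 t) 0 + Num.max (f2 t) 0)
                       (fun t => Num.max (- f1 t) 0 + Num.max (- f2 t) 0)).
- rewrite !NN_D ?fineD // => [|t|t|t|t]; try exact: max0_ge0.
  rewrite !Ecur_def; lra.
- by move=> t; rewrite addr_ge0 ?max0_ge0.
- by move=> t; rewrite addr_ge0 ?max0_ge0.
- by rewrite NN_D ?fin_numD ?a1 ?a2 // => t; exact: max0_ge0.
- by rewrite NN_D ?fin_numD ?b1 ?b2 // => t; exact: max0_ge0.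
move=> t _.
case: (leP (f1 t) 0) => h1; case: (leP (f2 t) 0) => h2.
- rewrite max_l ?oppr_ge0 // max_l ?oppr_ge0 //; lra.
- rewrite max_l ?oppr_ge0 // max_r ?oppr_le0 ?ltW //; lra.
- rewrite max_r ?oppr_le0 ?ltW // max_l ?oppr_ge0 //; lra.
- rewrite max_r ?oppr_le0 ?ltW // max_r ?oppr_le0 ?ltW //; lra.
Qed.

Lemma EcurN f : Ecur Sig P s (fun t => - f t) = - Ecur Sig P s f.
Proof.
rewrite !Ecur_def (NN_ext (g := fun t => Num.max (- - f t) 0)
  (h := fun t => Num.max (f t) 0)); last by move=> t _; rewrite opprK.
lra.
Qed.

Lemma EcurZp c f : 0 <= c -> Ecur Sig P s (fun t => c * f t) = c * Ecur Sig P s f.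
Proof.
move=> c0; rewrite !Ecur_def.
rewrite (NN_ext (g := fun t => Num.max (c * f t) 0) (h := fun t => c * Num.max (f t) 0));
  last by move=> t _; rewrite maxr_pMr // mulr0.
rewrite (NN_ext (g := fun t => Num.max (- (c * f t)) 0) (h := fun t => c * Num.max (- f t) 0));
  last by move=> t _; rewrite maxr_pMr // mulr0 mulrN.
rewrite !NN_Z // => [|t|t]; try exact: max0_ge0.
rewrite !fine_Z ?NN_ge0 // => [|t|t]; try exact: max0_ge0.
ring.
Qed.

Lemma EcurZ c f : Ecur Sig P s (fun t => c * f t) = c * Ecur Sig P s f.
Proof.
have [c0|c0] := leP 0 c; first exact: EcurZp.
rewrite (_ : (fun t => c * f t) = (fun t => - ((- c) * f t))); last first.
  by apply/funext => t; rewrite mulNr opprK.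
rewrite EcurN EcurZp ?oppr_ge0 ?ltW //; ring.
Qed.

Lemma IntD f1 f2 : Int f1 -> Int f2 -> Int (fun t => f1 t + f2 t).
Proof.
move=> I1 I2; apply: (Int_le (g := fun t => `|f1 t| + `|f2 t|)).
- by move=> t; rewrite addr_ge0.
- by move=> t _; exact: ler_normD.
by rewrite NN_D // fin_numD; apply/andP; split.
Qed.

Lemma IntZ c f : Int f -> Int (fun t => c * f t).
Proof.
move=> I1; apply: (Int_le (g := fun t => `|c| * `|f t|)).
- by move=> t; rewrite mulr_ge0.
- by move=> t _; rewrite normrM.
by rewrite NN_Z // fin_numM.

Qed.

End Esum.


Section PW.
Context {R : realType}.

Lemma pw_lin (p y : R) : 2 < p -> 0 <= y -> y <= 1 + y `^ p.
Proof.
move=> p2 y0; have hp := powR_ge0 y p.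
have [y1|y1] := leP y 1; first lra.
have : y `^ 1 <= y `^ p by apply: ler_powR; lra.
rewrite powRr1 //; lra.
Qed.

Lemma pw_sq (p y : R) : 2 < p -> 0 <= y -> y ^+ 2 <= 1 + y `^ p.
Proof.
move=> p2 y0; have hp := powR_ge0 y p.
have [y1|y1] := leP y 1.
  have : y ^+ 2 <= 1 by rewrite expr_le1.
  lra.
have : y `^ 2 <= y `^ p by apply: ler_powR; lra.
rewrite -[2]/(2%:R) powR_mulrn //; lra.
Qed.

Lemma pw_tail (p k m y : R) : k <= p -> 0 < m -> m <= y ->
  y `^ k <= m `^ (- (p - k)) * y `^ p.
Proof.
move=> kp m0 my.
have y0 : 0 < y by apply: lt_le_trans m0 my.
have e : y `^ p = y `^ k * y `^ (p - k).
  by rewrite -powRD ?subrKC // (gt_eqF y0) implybT.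
have h1 : m `^ (p - k) <= y `^ (p - k).
  apply: ge0_ler_powR; rewrite ?nnegrE ?subr_ge0 //; lra.
have h2 : m `^ (- (p - k)) * m `^ (p - k) = 1.
  by rewrite powRN mulVf // gt_eqF // powR_gt0.
have h3 := powR_gt0 (- (p - k)) m0.
have h4 := powR_ge0 y k.
have h5 : y `^ k * m `^ (p - k) <= y `^ k * y `^ (p - k) by apply: ler_wpM2l.
have h6 := ler_wpM2l (ltW h3) h5.
rewrite e; apply: le_trans h6; rewrite mulrCA h2 mulr1 //.


Qed.

Lemma powR_small (e d : R) : e < 0 -> 0 < d ->
  exists M, forall x, M < x -> x `^ e <= d.
Proof.
move=> e0 d0; exists (d `^ (e^-1)) => x hx.
have M0 : 0 < d `^ (e^-1) by rewrite powR_gt0.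
have x0 : 0 < x by apply: lt_trans M0 hx.
have h : (d `^ (e^-1)) `^ (- e) <= x `^ (- e).
  apply: ge0_ler_powR; rewrite ?nnegrE ?oppr_ge0 ?ltW //.
have E : (d `^ (e^-1)) `^ (- e) = d^-1.
  by rewrite -powRrM mulrN mulVf ?lt_eqF // powR_inv1 ?ltW.
rewrite E in h.
have hx0 : 0 < x `^ (- e) by rewrite powR_gt0.
rewrite -[e]opprK powRN -(invrK d) lef_pV2 ?posrE ?invr_gt0 //.
Qed.


Lemma frac_bound2 (A B z d : R) : 0 <= A -> 0 <= B -> 0 < d ->
  z <= d / ((1 + A) * (1 + B)) -> A * B * z <= d.
Proof.
move=> A0 B0 d0 hz.
have h0 : 0 < (1 + A) * (1 + B) by rewrite mulr_gt0 //; lra.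
have [z0|z0] := leP z 0.
  have AB := mulr_ge0 A0 B0.
  have : A * B * z <= 0 by nra.
  lra.
have h1 : (1 + A) * (1 + B) * z <= d by rewrite mulrC -ler_pdivlMr.
have : A * B <= (1 + A) * (1 + B) by nra.
nra.
Qed.

Lemma frac_bound (A z d : R) : 0 <= A -> 0 < d -> z <= d / (1 + A) -> A * z <= d.
Proof.
move=> A0 d0 hz.
have h0 : 0 < 1 + A by lra.
have [z0|z0] := leP z 0; first nra.
have h1 : (1 + A) * z <= d by rewrite mulrC -ler_pdivlMr.
nra.
Qed.

End PW.


Theorem lemma3p4 (R : realType) (S : finType) (Sig : set (R * S))
  (P : R * S -> R * S -> R) (p Cp : R) (c s2 : S -> R) (zeta : R) :
  locally_finite_state Sig ->
  transition_kernel Sig P ->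
  2 < p ->
  (forall s, Sig s ->
     (\esum_(t in Sig) (P s t * (`|t.1 - s.1| `^ p))%:E <= Cp%:E)%E) ->
  (forall i, 0 <= s2 i) ->
  (exists i, s2 i != 0) ->
  (* mu_i(x) = c_i / x + o(1/x) *)
  (forall i (eps : R), 0 < eps -> exists M : R, forall x : R,
     Sig (x, i) -> M < x ->
     `|mu_drift Sig P x i - c i / x| <= eps / x) ->
  (* sigma_i^2(x) = s_i^2 + o(1) *)
  (forall i (eps : R), 0 < eps -> exists M : R, forall x : R,
     Sig (x, i) -> M < x ->
     `|sigma2 Sig P x i - s2 i| <= eps) ->
  (p - 1)^-1 < zeta -> zeta < 1 ->
  forall (r : R) (i : S) (eps : R), 0 < eps -> exists M : R, forall x : R,
    Sig (x, i) -> M < x ->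
    `|Ecur Sig P (x, i)
        (fun t => (t.1 `^ r - x `^ r) *
                  (if `|t.1 - x| <= x `^ zeta then 1 else 0))
      - r * x `^ (r - 2) * (c i + (r - 1) / 2 * s2 i)|
    <= eps * `|r| * x `^ (r - 2).
Proof.
move=> _ [P0 Psum] p2 Hmom _ _ Hmu Hsig zl zu r i eps eps0.
have p1 : 0 < p - 1 by lra.
have zeta0 : 0 < zeta.
  have : 0 < (p - 1)^-1 by rewrite invr_gt0.
  lra.
have zp1 : 1 < zeta * (p - 1).
  by move: zl; rewrite -[_^-1]mul1r ltr_pdivrMr.
set Cq := `|Cp|.
have Cq0 : 0 <= Cq by rewrite /Cq normr_ge0.
set Lk := `|r - 1| * Lc (r - 2).
have Lk0 : 0 <= Lk by rewrite /Lk /Lc !mulr_ge0 // expR_ge0.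
set e5 := eps / 5.
have e50 : 0 < e5 by rewrite /e5 divr_gt0.
have [M1 hM1] := Hmu i e5 e50.
set eps2 := e5 / (1 + `|r - 1|).
have eps20 : 0 < eps2.
  have : 0 <= `|r - 1| by [].
  by move=> h; rewrite /eps2 divr_gt0 //; lra.
have [M2 hM2] := Hsig i eps2 eps20.
have [MA1 hA1] := @powR_small R (zeta - 1) (2^-1) ltac:(lra) ltac:(lra).
have d2 : 0 < e5 / (1 + Lk * (1 + Cq)).
  have : 0 <= Lk * (1 + Cq) by rewrite mulr_ge0 // addr_ge0.
  move=> h; rewrite divr_gt0 //; lra.
have [MA2 hA2] := @powR_small R (zeta - 1) _ ltac:(lra) d2.
set e3 := 1 + zeta * (- (p - 1)).
have e3n : e3 < 0 by rewrite /e3 mulrN; lra.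
have d3 : 0 < e5 / (1 + Cq) by rewrite divr_gt0 //; lra.
have [MA3 hA3] := @powR_small R e3 _ e3n d3.
set e4 := zeta * (- (p - 2)).
have e4n : e4 < 0 by rewrite /e4 mulrN oppr_lt0 mulr_gt0 // subr_gt0.
have d4 : 0 < e5 / ((1 + Cq) * (1 + `|r - 1|)).
  have : 0 <= `|r - 1| by [].
  by move=> h; rewrite divr_gt0 // mulr_gt0 //; lra.
have [MA4 hA4] := @powR_small R e4 _ e4n d4.
exists (Num.max 1 (Num.max M1 (Num.max M2 (Num.max MA1 (Num.max MA2 (Num.max MA3 MA4)))))).
move=> x Sx; rewrite !gt_max => /and3P[x1 xM1 /and3P[xM2 xA1 /and3P[xA2 xA3 xA4]]].
have x0 : 0 < x by lra.
have xne : x != 0 by rewrite gt_eqF.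
set Z := x `^ (r - 2).
have Z0 : 0 < Z by rewrite powR_gt0.
have xr : x `^ r = Z * x ^+ 2.
  have x2 : x `^ 2 = x ^+ 2 by rewrite -powR_mulrn ?ltW.
  by rewrite /Z -x2 -powRD ?xne ?implybT // subrK.
set s := (x, i).
pose Mp := fun t : R * S => `|t.1 - x| `^ p.
pose NNs := @NN R S Sig P s.
have P0s : forall t, 0 <= P s t by move=> t; exact: P0.
have Mp0 : forall t, 0 <= Mp t by move=> t; exact: powR_ge0.
have NMp : (NNs Mp <= Cp%:E)%E by exact: (Hmom s Sx).
have NMp0 : (0 <= NNs Mp)%E by exact: (NN_ge0 P0s).
have NMpf : NNs Mp \is a fin_num.
  by rewrite ge0_fin_numE // (le_lt_trans NMp) // ltry.
have fMp : fine (NNs Mp) <= Cq.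
  apply: le_trans (ler_norm Cp); rewrite -lee_fin fineK //.
have N1 : NNs (fun _ => 1) = 1%E.
  by rewrite /NNs /NN -(Psum s Sx); apply: eq_esum => t _; rewrite mulr1.
have hB1 : forall C, 0 <= C -> NNs (fun t => C * (1 + Mp t)) \is a fin_num /\
    fine (NNs (fun t => C * (1 + Mp t))) <= C * (1 + Cq).
  move=> C C0; rewrite /NNs (NN_Z P0s) // => [|t]; last by rewrite addr_ge0.
  rewrite (NN_D P0s) // -/NNs N1 fin_numM // ?fin_numD ?NMpf // fine_Z ?adde_ge0 //.
  split => //; rewrite ler_wpM2l // fineD // fine1; lra.
have hB2 : forall C, 0 <= C -> NNs (fun t => C * Mp t) \is a fin_num /\
    fine (NNs (fun t => C * Mp t)) <= C * Cq.
  move=> C C0; rewrite /NNs (NN_Z P0s) // -/NNs fin_numM // fine_Z //.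
  by split => //; rewrite ler_wpM2l.
have hD1 : forall t, `|t.1 - x| <= 1 * (1 + Mp t).
  by move=> t; rewrite mul1r; apply: pw_lin.
have hD2 : forall t, `|(t.1 - x) ^+ 2| <= 1 * (1 + Mp t).
  by move=> t; rewrite mul1r normrX; apply: pw_sq.
have [hB10 _] := hB1 1 ler01.
pose IntS := @Int R S Sig P s.
have ID1 : IntS (fun t => t.1 - x).
  apply: (Int_le P0s (g := fun t => 1 * (1 + Mp t))) => // t.
  by rewrite mul1r addr_ge0.
have ID2 : IntS (fun t => (t.1 - x) ^+ 2).
  apply: (Int_le P0s (g := fun t => 1 * (1 + Mp t))) => // t.
  by rewrite mul1r addr_ge0.
pose ind := fun t : R * S => if `|t.1 - x| <= x `^ zeta then (1:R) else 0.
pose a := r * Z * x.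
pose b := r * (r - 1) / 2 * Z.
pose Rem := fun t : R * S =>
  (t.1 `^ r - x `^ r - a * (t.1 - x) - b * (t.1 - x) ^+ 2) * ind t.
pose Out := fun t : R * S => (a * (t.1 - x) + b * (t.1 - x) ^+ 2) * (1 - ind t).
pose xz := x `^ (zeta - 1).
have xz0 : 0 <= xz by exact: powR_ge0.
have xzh : xz <= 2^-1 := hA1 x xA1.
pose Crem := `|r| * Lk * Z * xz.
have Crem0 : 0 <= Crem by rewrite /Crem !mulr_ge0 // ltW.
have hRem : forall t, `|Rem t| <= Crem * (1 + Mp t).
  move=> t; rewrite /Rem /ind; case: ifP => hD; last first.
    by rewrite mulr0 normr0 mulr_ge0 // addr_ge0.
  rewrite mulr1.
  pose y := t.1 / x.
  have ht : t.1 = x * y by rewrite /y mulrC divfK.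
  have hy1 : y - 1 = (t.1 - x) / x by rewrite /y mulrBl divff.
  have htx : `|t.1 - x| = x * `|y - 1|.
    by rewrite hy1 normrM normfV (gtr0_norm x0) mulrC divfK.
  have hy : `|y - 1| <= xz.
    have : x * `|y - 1| <= x * xz.
      rewrite -htx /xz powRB ?xne ?implybT // (powRr1 (ltW x0)) mulrC divfK //.
    by rewrite ler_pM2l.
  have hy2 : `|y - 1| <= 2^-1 by apply: le_trans hy xzh.
  have y0 : 0 <= y by move: hy2; rewrite ler_norml; lra.
  have tr : t.1 `^ r = x `^ r * y `^ r by rewrite ht powRM // ltW.
  have key : t.1 `^ r - x `^ r - a * (t.1 - x) - b * (t.1 - x) ^+ 2 = Z * x ^+ 2 * G r y.
    rewrite tr xr /G /a /b ht; ring.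
  rewrite key normrM (ger0_norm (mulr_ge0 (ltW Z0) (sqr_ge0 x))).
  have tb := taylor_bound r y hy2.
  have W0 : 0 <= `|y - 1| by [].
  have st1 : `|G r y| <= `|r| * Lk * (`|y - 1| ^+ 2 * xz).
    apply: le_trans tb _; rewrite /Lk exprSr.
    have hL : 0 <= `|r| * `|r - 1| * Lc (r - 2) by rewrite !mulr_ge0 // /Lc !mulr_ge0 // expR_ge0.
    have h2 : `|y - 1| ^+ 2 * `|y - 1| <= `|y - 1| ^+ 2 * xz by apply: ler_wpM2l; rewrite ?exprn_ge0.
    apply: le_trans (ler_wpM2l hL h2) _.
    by rewrite !mulrA.
  have st2 : Z * x ^+ 2 * `|G r y| <= Z * x ^+ 2 * (`|r| * Lk * (`|y - 1| ^+ 2 * xz)).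
    by apply: ler_wpM2l st1; rewrite mulr_ge0 ?sqr_ge0 // ltW.
  have e : Z * x ^+ 2 * (`|r| * Lk * (`|y - 1| ^+ 2 * xz)) = Crem * ((x * `|y - 1|) ^+ 2).
    by rewrite /Crem; ring.
  rewrite e -htx in st2; apply: le_trans st2 _.
  by apply: ler_wpM2l => //; rewrite /Mp; apply: pw_sq.
pose m := x `^ zeta.
have m0 : 0 < m by rewrite powR_gt0.
pose q1 := x `^ (zeta * - (p - 1)).
pose q2 := x `^ (zeta * - (p - 2)).
have q10 : 0 <= q1 by exact: powR_ge0.
have q20 : 0 <= q2 by exact: powR_ge0.
pose Cout := `|a| * q1 + `|b| * q2.
have Cout0 : 0 <= Cout by rewrite /Cout addr_ge0 // mulr_ge0.
have hOut : forall t, `|Out t| <= Cout * Mp t.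
  move=> t; rewrite /Out /ind; case: ifP => hD.
    by rewrite subrr mulr0 normr0 mulr_ge0.
  rewrite subr0 mulr1.
  have hm : m <= `|t.1 - x| by rewrite ltW // ltNge hD.
  have t1 := @pw_tail R p 1 m `|t.1 - x| ltac:(lra) m0 hm.
  have t2 := @pw_tail R p 2 m `|t.1 - x| ltac:(lra) m0 hm.
  rewrite powRr1 // /m -powRrM -/q1 -/(Mp t) in t1.
  rewrite /m -powRrM -/q2 -/(Mp t) -[2]/(2%:R) powR_mulrn // in t2.
  apply: le_trans (ler_normD _ _) _.
  rewrite (normrM a) (normrM b) normrX /Cout mulrDl -!mulrA.
  by apply: lerD; apply: ler_wpM2l.
have [hB1r hB1b] := hB1 Crem Crem0.
have [hB2r hB2b] := hB2 Cout Cout0.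
have gR0 : forall t, 0 <= Crem * (1 + Mp t) by move=> t; rewrite mulr_ge0 // addr_ge0.
have gO0 : forall t, 0 <= Cout * Mp t by move=> t; rewrite mulr_ge0.
have IRem : IntS Rem.
  by apply: (Int_le P0s (g := fun t => Crem * (1 + Mp t))) => // t _; exact: hRem.
have IOut : IntS (fun t => - Out t).
  apply: (Int_le P0s (g := fun t => Cout * Mp t)) => // t _.
  by rewrite normrN; exact: hOut.
have ERb : `|Ecur Sig P s Rem| <= Crem * (1 + Cq).
  apply: le_trans hB1b.
  by apply: (Ecur_bound P0s Rem (fun t => Crem * (1 + Mp t))) => // t _; exact: hRem.
have EOb : `|Ecur Sig P s Out| <= Cout * Cq.
  apply: le_trans hB2b.
  by apply: (Ecur_bound P0s Out (fun t => Cout * Mp t)) => // t _; exact: hOut.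
have EF : Ecur Sig P s
        (fun t => (t.1 `^ r - x `^ r) * (if `|t.1 - x| <= x `^ zeta then 1 else 0)) =
    a * mu_drift Sig P x i + b * sigma2 Sig P x i + Ecur Sig P s Rem - Ecur Sig P s Out.
  have eqF : (fun t : R * S => (t.1 `^ r - x `^ r) * (if `|t.1 - x| <= x `^ zeta then 1 else 0)) =
      (fun t => (a * (t.1 - x) + b * (t.1 - x) ^+ 2 + Rem t) + - Out t).
    apply: funext => t /=; rewrite /Rem /Out /ind; case: ifP => _; ring.
  rewrite eqF.
  rewrite (EcurD P0s) //; last first.
    by apply: (IntD P0s) => //; apply: (IntD P0s); apply: (IntZ P0s).
  rewrite EcurN (EcurD P0s) //; last by apply: (IntD P0s); apply: (IntZ P0s).
  rewrite (EcurD P0s); try by apply: (IntZ P0s).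
  by rewrite !(EcurZ P0s).
rewrite EF.
set mu := mu_drift Sig P x i.
set sg := sigma2 Sig P x i.
set ER := Ecur Sig P s Rem.
set EO := Ecur Sig P s Out.
have hmu : `|mu - c i / x| <= e5 / x by exact: hM1 x Sx xM1.
have hsg : `|sg - s2 i| <= eps2 by exact: hM2 x Sx xM2.
pose Q := `|r| * Z.
have Q0 : 0 <= Q by rewrite /Q mulr_ge0 // ltW.
have r10 : 0 <= `|r - 1| by [].
have F1 : `|a * mu - r * Z * c i| <= Q * e5.
  have -> : a * mu - r * Z * c i = r * Z * x * (mu - c i / x) by rewrite /a; field.
  have -> : `|r * Z * x * (mu - c i / x)| = Q * (x * `|mu - c i / x|).
    by rewrite /Q !normrM (gtr0_norm x0) (gtr0_norm Z0); ring.
  apply: ler_wpM2l => //.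
  by have := ler_wpM2l (ltW x0) hmu; rewrite mulrCA divff // mulr1.
have F2 : `|b * sg - r * Z * ((r - 1) / 2 * s2 i)| <= Q * e5.
  have -> : b * sg - r * Z * ((r - 1) / 2 * s2 i) = r * (r - 1) / 2 * Z * (sg - s2 i).
    by rewrite /b; ring.
  have -> : `|r * (r - 1) / 2 * Z * (sg - s2 i)| = Q * (`|r - 1| * `|sg - s2 i| / 2).
    by rewrite /Q !normrM (gtr0_norm Z0) normfV (gtr0_norm (ltr0n _ 2)); ring.
  apply: ler_wpM2l => //.
  have e : (1 + `|r - 1|) * eps2 = e5 by rewrite /eps2 mulrC divfK // gt_eqF //; lra.
  have h1 : `|r - 1| * `|sg - s2 i| <= `|r - 1| * eps2 by apply: ler_wpM2l.
  rewrite mulrDl mul1r in e.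
  lra.
have F3 : `|ER| <= Q * e5.
  apply: le_trans ERb _.
  have -> : Crem * (1 + Cq) = Q * (Lk * (1 + Cq) * xz) by rewrite /Crem /Q; ring.
  apply: ler_wpM2l => //; apply: frac_bound => //.
    by rewrite mulr_ge0 // addr_ge0.
  exact: hA2 x xA2.
have F4 : `|EO| <= Q * (2 * e5).
  apply: le_trans EOb _.
  have xq1 : x * q1 = x `^ e3.
    by rewrite /q1 /e3 powRD ?xne ?implybT // powRr1 // ltW.
  have -> : Cout * Cq = Q * ((x `^ e3) * Cq + `|r - 1| * Cq * q2 / 2).
    rewrite /Cout /Q -xq1 /a /b !normrM (gtr0_norm x0) (gtr0_norm Z0) normfV (gtr0_norm (ltr0n _ 2)).
    ring.
  apply: ler_wpM2l => //.
  have h3 : Cq * x `^ e3 <= e5 by apply: frac_bound => //; exact: hA3 x xA3.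
  have h4 : Cq * `|r - 1| * q2 <= e5 by apply: frac_bound2 => //; exact: hA4 x xA4.
  have h5 : 0 <= `|r - 1| * Cq * q2 by rewrite !mulr_ge0.
  have : `|r - 1| * Cq * q2 = Cq * `|r - 1| * q2 by ring.
  have : x `^ e3 * Cq = Cq * x `^ e3 by ring.
  lra.
have -> : a * mu + b * sg + ER - EO - r * Z * (c i + (r - 1) / 2 * s2 i) =
    (a * mu - r * Z * c i) + (b * sg - r * Z * ((r - 1) / 2 * s2 i)) + ER - EO by ring.
have -> : eps * `|r| * Z = 5 * (Q * e5) by rewrite /Q /e5; field.
have n1 := ler_normD ((a * mu - r * Z * c i) + (b * sg - r * Z * ((r - 1) / 2 * s2 i)) + ER) (- EO).
have n2 := ler_normD ((a * mu - r * Z * c i) + (b * sg - r * Z * ((r - 1) / 2 * s2 i))) ER.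
have n3 := ler_normD (a * mu - r * Z * c i) (b * sg - r * Z * ((r - 1) / 2 * s2 i)).
rewrite normrN in n1.
lra.
Qed.
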